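(* Let $k\ge1$ and let $\alpha_1,\dots,\alpha_k\in[0,1]$. Define accountability weights $$w_j=\Bigl(\prod_{\ell=1}^{j}\alpha_\ell\Bigr)(1-\alpha_{j+1})\quad (j=1,\dots,k-1),\qquad w_k=\prod_{\ell=1}^{k}\alpha_\ell,$$ and let $\bar\alpha=\max_{\ell}\alpha_\ell$. Then $$\max_{j\in\{1,\dots,k\}}w_j\le 1-(1-\bar\alpha)^k.$$ In particular, if $\bar\alpha<1$, then $\max_j w_j<1$ for every finite $k$.
   Context: The $\alpha_\ell$ are the delegation degrees along a delegation chain of length $k$ (agent $\ell$ delegates to agent $\ell+1$ with degree $\alpha_\ell$); $w_j$ is the accountability weight of the $j$-th agent in the chain. *)

(* Defs.v *)
From mathcomp Require Import all_boot all_order all_algebra.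
Set Implicit Arguments. Unset Strict Implicit. Unset Printing Implicit Defensive.
Import Order.TTheory GRing.Theory Num.Theory.
Local Open Scope ring_scope.

(* Delegation degrees alpha_1, ..., alpha_k are given as alpha : nat -> R,
   only the values at indices 1..k are relevant. *)

Definition acc_weight (R : pzRingType) (k : nat) (alpha : nat -> R) (j : nat) : R :=
  if (j < k)%N then (\prod_(1 <= l < j.+1) alpha l) * (1 - alpha j.+1)
  else \prod_(1 <= l < k.+1) alpha l.

(* alpha_bar = max_{1 <= l <= k} alpha_l (the seed 0 is harmless as alphas are >= 0 and k >= 1). *)
Definition alpha_bar (R : realDomainType) (k : nat) (alpha : nat -> R) : R :=
  \big[Num.max/0]_(1 <= l < k.+1) alpha l.

Definition max_weight (R : realDomainType) (k : nat) (alpha : nat -> R) : R :=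
  \big[Num.max/0]_(1 <= j < k.+1) acc_weight k alpha j.

(* Main.v *)
Require Import Defs.
From mathcomp Require Import all_boot all_order all_algebra.
From mathcomp Require Import ring lra.
Import Order.TTheory GRing.Theory Num.Theory.
Local Open Scope ring_scope.

Lemma prod01 (R : realFieldType) (alpha : nat -> R) (m n : nat) :
  (forall l : nat, (m <= l < n)%N -> 0 <= alpha l <= 1) ->
  0 <= \prod_(m <= l < n) alpha l <= 1.
Proof.
move=> H; rewrite big_nat_cond.
apply: (big_ind (fun x => 0 <= x <= 1)); first by rewrite ler01 lexx.
  move=> x y /andP[x0 x1] /andP[y0 y1]; apply/andP; split; first exact: mulr_ge0.
  by rewrite -[1]mulr1; apply: ler_pM.
by move=> i /andP[/H ->].
Qed.

Lemma prod_le_first (R : realFieldType) (alpha : nat -> R) (n : nat) :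
  (forall l : nat, (1 <= l <= n)%N -> 0 <= alpha l <= 1) -> (1 <= n)%N ->
  \prod_(1 <= l < n.+1) alpha l <= alpha 1.
Proof.
move=> H n1; rewrite big_ltn // .
have /andP[a0 _] := H 1%N n1.
have /andP[p0 p1] : 0 <= \prod_(2 <= l < n.+1) alpha l <= 1.
  by apply: prod01 => l /andP[l2 ln]; apply: H; rewrite ltnS in ln; rewrite ln andbT ltnW.
by rewrite -{2}[alpha 1]mulr1 ler_wpM2l.
Qed.

Theorem proposition1 (R : realFieldType) (k : nat) (alpha : nat -> R) :
  (1 <= k)%N ->
  (forall l : nat, (1 <= l <= k)%N -> 0 <= alpha l <= 1) ->
  max_weight k alpha <= 1 - (1 - alpha_bar k alpha) ^+ k /\
  (alpha_bar k alpha < 1 -> max_weight k alpha < 1).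
Proof.
move=> k1 H.
set a := alpha_bar k alpha.
have a1 : alpha 1 <= a by rewrite /a /alpha_bar big_ltn // le_max lexx.
have /andP[al0 al1] := H 1%N k1.
have a0 : 0 <= a by apply: le_trans a1.
have aU : a <= 1.
  rewrite /a /alpha_bar big_nat_cond.
  apply: (big_ind (fun x => x <= 1)); first exact: ler01.
    by move=> x y x1 y1; rewrite ge_max x1 y1.
  move=> i /andP[/andP[i1 ik] _].
  by have /andP[_ ->] := H i ltac:(by rewrite i1 -ltnS).
have mw : max_weight k alpha <= a.
  rewrite /max_weight big_nat_cond.
  apply: (big_ind (fun x => x <= a)); first exact: a0.
    by move=> x y x1 y1; rewrite ge_max x1 y1.
  move=> j /andP[/andP[j1 jk] _]; rewrite /acc_weight.
  case: ifP => jlt.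
    have /andP[b0 b1] := H j.+1 jlt.
    have Hj : forall l, (1 <= l <= j)%N -> 0 <= alpha l <= 1.
      by move=> l /andP[l1 lj]; apply: H; rewrite l1 (leq_trans lj) // ltnW.
    have /andP[p0 _] := @prod01 R alpha 1 j.+1 ltac:(by move=> l; rewrite ltnS; apply: Hj).
    apply: (le_trans _ a1); apply: (le_trans _ (@prod_le_first R alpha j Hj j1)).
    by rewrite -{2}[\prod_(1 <= l < j.+1) alpha l]mulr1 ler_wpM2l // lerBlDr lerDl.
  by apply: (le_trans _ a1); apply: prod_le_first.
have pk' : forall m, (1 <= m)%N -> (1 - a) ^+ m <= 1 - a.
  case=> // n _; rewrite exprS -{3}[1 - a]mulr1.
  apply: ler_wpM2l; first by rewrite subr_ge0.
  by apply: exprn_ile1; rewrite ?subr_ge0 // lerBlDr lerDl.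
have pk := pk' k k1.
split; first by apply: le_trans mw _; lra.
by move=> alt; apply: le_lt_trans alt.
Qed.
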